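(* Let $\Sigma$ be a finite alphabet and $\mathsf{X} \in \{\mathsf{F},\mathsf{V}\}$. A regular language $L \subseteq \Sigma^*$ belongs to $\mathsf{X}(\mathcal{O}(\log n))$ if and only if $L^\mathsf{R}$ is recognized by a well-behaved DFA.
   Context: $L^\mathsf{R}$ is the set of reversals of words of $L$. A DFA $(Q,\Sigma,q_0,\delta,F)$ is well-behaved if every strongly connected component $C$ (inclusion-maximal set of mutually reachable states) reachable from $q_0$ satisfies: for all $q\in C$ and $u,v\in\Sigma^*$ with $|u|=|v|$ and $\delta(q,u),\delta(q,v)\in C$, $\delta(q,u)\in F\iff\delta(q,v)\in F$. A streaming algorithm is a deterministic (possibly infinite-state) automaton with an injective encoding of states into bit strings. Fixed-size: fix $a\in\Sigma$, $\mathrm{last}_n(a_1\cdots a_m)=a_{m-n+1}\cdots a_m$ if $n\le m$, else $a^{n-m}a_1\cdots a_m$; a fixed-size sliding window algorithm for $L$ is $(\mathcal{A}_n)_{n\ge0}$ with $\mathcal{A}_n$ accepting $\{w:\mathrm{last}_n(w)\in L\}$, space at $n$ = maximal encoding length of a state of $\mathcal{A}_n$. Variable-size: over $\Sigma\cup\{\downarrow\}$, the window is maintained by appending symbols of $\Sigma$ and letting $\downarrow$ delete the first window symbol (if any); an algorithm accepts the streams whose window lies in $L$, and its space at $n$ is the maximal encoding length of a state visited on a stream during which the window length never exceeds $n$. $\mathsf{F}(\mathcal{O}(\log n))$ / $\mathsf{V}(\mathcal{O}(\log n))$: languages with a fixed-size / variable-size algorithm of space $\mathcal{O}(\log n)$.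 *)

(* Defs.v *)
From mathcomp Require Import all_boot.
Set Implicit Arguments. Unset Strict Implicit. Unset Printing Implicit Defensive.

Record dfa (Sigma : finType) := Dfa {
  dfa_state :> finType;
  dfa_init : dfa_state;
  dfa_trans : dfa_state -> Sigma -> dfa_state;
  dfa_final : {set dfa_state} }.

Definition dfa_run (Sigma : finType) (A : dfa Sigma) (q : A) (u : seq Sigma) : A :=
  foldl (@dfa_trans Sigma A) q u.

Definition dfa_accepts (Sigma : finType) (A : dfa Sigma) (w : seq Sigma) : bool :=
  dfa_run (dfa_init A) w \in dfa_final A.

Definition recognizes (Sigma : finType) (A : dfa Sigma) (L : pred (seq Sigma)) : Prop :=
  forall w, dfa_accepts A w = L w.

Definition regular (Sigma : finType) (L : pred (seq Sigma)) : Prop :=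
  exists A : dfa Sigma, recognizes A L.

Definition rev_lang (Sigma : finType) (L : pred (seq Sigma)) : pred (seq Sigma) :=
  fun w => L (rev w).

Definition reach (Sigma : finType) (A : dfa Sigma) (q p : A) : Prop :=
  exists u, dfa_run q u = p.

Definition strongly_connected (Sigma : finType) (A : dfa Sigma) (C : {set A}) : Prop :=
  forall p q, p \in C -> q \in C -> reach p q.

Definition is_scc (Sigma : finType) (A : dfa Sigma) (C : {set A}) : Prop :=
  strongly_connected C /\
  forall D : {set A}, strongly_connected D -> C \subset D -> D \subset C.

Definition well_behaved (Sigma : finType) (A : dfa Sigma) : Prop :=
  forall C : {set A}, is_scc C ->
    (exists2 q0, q0 \in C & reach (dfa_init A) q0) ->
    forall (q : A) (u v : seq Sigma), q \in C -> size u = size v ->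
      dfa_run q u \in C -> dfa_run q v \in C ->
      (dfa_run q u \in dfa_final A) = (dfa_run q v \in dfa_final A).

Record stream_alg (Gamma : Type) := StreamAlg {
  sa_state : Type;
  sa_init : sa_state;
  sa_step : sa_state -> Gamma -> sa_state;
  sa_acc : sa_state -> bool;
  sa_enc : sa_state -> seq bool;
  sa_enc_inj : injective sa_enc }.

Definition sa_run (Gamma : Type) (A : stream_alg Gamma) (w : seq Gamma) : sa_state A :=
  foldl (@sa_step Gamma A) (sa_init A) w.

Definition log2 (n : nat) : nat := trunc_log 2 n.

Definition last_n (Sigma : Type) (a : Sigma) (n : nat) (w : seq Sigma) : seq Sigma :=
  if n <= size w then drop (size w - n) w else nseq (n - size w) a ++ w.

Definition fixed_sw_alg (Sigma : Type) (a : Sigma) (L : pred (seq Sigma))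
    (A : nat -> stream_alg Sigma) : Prop :=
  forall n w, sa_acc (sa_run (A n) w) = L (last_n a n w).

(* space at n = maximal encoding length of a state of A_n; "space O(log n)" *)
Definition in_F_log (Sigma : Type) (a : Sigma) (L : pred (seq Sigma)) : Prop :=
  exists A : nat -> stream_alg Sigma, fixed_sw_alg a L A /\
    exists c N, forall n, N <= n ->
      forall s : sa_state (A n), size (sa_enc s) <= c * log2 n.

(* variable-size model: alphabet Sigma + {down}, with None = down *)
Definition window (Sigma : Type) (s : seq (option Sigma)) : seq Sigma :=
  foldl (fun w x => match x with Some b => rcons w b | None => behead w end) [::] s.

Definition var_sw_alg (Sigma : Type) (L : pred (seq Sigma))
    (A : stream_alg (option Sigma)) : Prop :=
  forall s, sa_acc (sa_run A s) = L (window s).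

(* space at n = maximal encoding length of a state visited on a stream during
   which the window length never exceeds n; the visited states are the states
   reached after the prefixes of such a stream *)
Definition in_V_log (Sigma : Type) (L : pred (seq Sigma)) : Prop :=
  exists A : stream_alg (option Sigma), var_sw_alg L A /\
    exists c N, forall n, N <= n ->
      forall s : seq (option Sigma),
        (forall k, k <= size s -> size (window (take k s)) <= n) ->
        forall k, k <= size s -> size (sa_enc (sa_run A (take k s))) <= c * log2 n.

(* the model X in {F, V}; the fixed-size model carries its padding symbol a *)
Inductive sw_model (Sigma : Type) := Fixed (a : Sigma) | VarSize.

Definition in_class_log (Sigma : Type) (X : sw_model Sigma) (L : pred (seq Sigma)) : Prop :=
  match X with
  | Fixed a => in_F_log a L
  | VarSize => in_V_log L
  end.

(* Main.v *)
Require Import Defs.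
From mathcomp Require Import all_boot.
From Stdlib Require Import Classical ClassicalEpsilon ProofIrrelevance FunctionalExtensionality.
From mathcomp Require Import zify.
Set Implicit Arguments. Unset Strict Implicit. Unset Printing Implicit Defensive.

Definition bval (s : seq bool) : nat := foldr (fun (b : bool) (acc : nat) => nat_of_bool b + 2 * acc) 0 s.

Fixpoint binf (k a : nat) : seq bool :=
  match k with
  | 0 => [::]
  | k'.+1 => if a is 0 then [::] else odd a :: binf k' a./2
  end.
Definition bin (a : nat) := binf a a.

Lemma binfK k a : a <= k -> bval (binf k a) = a.
Proof.
elim: k a => [|k IH] a /=; first by rewrite leqn0 => /eqP->.
case: a => [//|a] Ha /=.
have E := odd_double_half a.+1.
rewrite IH; last by move: E Ha; rewrite -muln2; lia.
by move: E; rewrite -muln2; lia.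
Qed.

Lemma bin_inj : injective bin.
Proof. by move=> a b H; rewrite -(binfK (leqnn a)) -/(bin a) H /bin binfK. Qed.

Lemma size_binf k a s : a < 2 ^ s -> size (binf k a) <= s.
Proof.
elim: k a s => [|k IH] a s //=. case: a => [//|a] H /=.
case: s H => [|s] H; first by rewrite expn0 in H.
rewrite ltnS IH //. rewrite expnS in H.
have := odd_double_half a.+1. rewrite -muln2 => E. 
rewrite -E in H. lia.
Qed.

Lemma size_bin a s : a < 2 ^ s -> size (bin a) <= s.
Proof. exact: size_binf. Qed.

Definition code (m r : nat) : seq bool :=
  flatten [seq [:: true; b] | b <- bin m] ++ false :: bin r.

Lemma flat_inj (a1 a2 b1 b2 : seq bool) :
  flatten [seq [:: true; b] | b <- a1] ++ false :: b1 =
  flatten [seq [:: true; b] | b <- a2] ++ false :: b2 -> a1 = a2 /\ b1 = b2.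
Proof.
elim: a1 a2 => [|x a1 IH] [|y a2] //=; first by case.
by case=> -> /IH [-> ->].
Qed.

Lemma code_inj m1 r1 m2 r2 : code m1 r1 = code m2 r2 -> m1 = m2 /\ r1 = r2.
Proof. by move/flat_inj=> [/bin_inj -> /bin_inj ->]. Qed.

Lemma size_code m r : size (code m r) = (size (bin m)).*2 + (size (bin r)).+1.
Proof.
rewrite /code size_cat /=. elim: (bin m) => //= b s IH. rewrite doubleS !addSn IH. by [].
Qed.

Lemma bval_lt s : bval s < 2 ^ size s.
Proof. elim: s => //= b s IH; rewrite expnS; case: b => /=; lia. Qed.

Lemma bval_rcons_pos s : 0 < bval (rcons s true).
Proof. elim: s => //= b s IH; lia. Qed.

Lemma bval_rcons_inj s1 s2 : bval (rcons s1 true) = bval (rcons s2 true) -> s1 = s2.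
Proof.
elim: s1 s2 => [|x s1 IH] [|y s2] //=.
- have := bval_rcons_pos s2. case: y => /=; lia.
- have := bval_rcons_pos s1. case: x => /=; lia.
- move=> H. have Hx : x = y.
    have := bval_rcons_pos s1; have := bval_rcons_pos s2.
    move: H; case: x; case: y => //=; lia.
  subst y. congr (_ :: _). apply: IH. case: x H => /=; lia.
Qed.

Lemma count_bound (T : finType) (f : T -> seq bool) s :
  injective f -> (forall t, size (f t) <= s) -> #|T| <= 2 ^ s.+1.
Proof.
move=> fi fs.
have lt t : bval (rcons (f t) true) < 2 ^ s.+1.
  apply: leq_trans (bval_lt _) _. rewrite size_rcons leq_exp2l // ltnS. exact: fs.
have := @leq_card T _ (fun t => Ordinal (lt t)).
rewrite card_ord. apply => x y [] /bval_rcons_inj; exact: fi.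
Qed.

Lemma run_cat (S : finType) (A : dfa S) (q : A) u v :
  dfa_run q (u ++ v) = dfa_run (dfa_run q u) v.
Proof. by rewrite /dfa_run foldl_cat. Qed.

Lemma run_cons (S : finType) (A : dfa S) (q : A) b u :
  dfa_run q (b :: u) = dfa_run (dfa_trans q b) u.
Proof. by []. Qed.

Definition drel (S : finType) (A : dfa S) : rel A :=
  fun p q => [exists b, dfa_trans p b == q].

Lemma reach_connect (S : finType) (A : dfa S) (p q : A) :
  reach p q <-> connect (@drel S A) p q.
Proof.
split.
- case=> u <-. elim: u p => [|b u IH] p; first exact: connect0.
  rewrite run_cons. apply: connect_trans (IH _). apply: connect1.
  by apply/existsP; exists b.
- case/connectP=> s. elim: s p => [|r s IH] p /=; first by move=> _ ->; exists [::].
  case/andP=> /existsP [b /eqP Hb] Hp Hq. case: (IH r Hp Hq) => u Hu.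
  by exists (b :: u); rewrite run_cons Hb.
Qed.

Lemma reach_trans (S : finType) (A : dfa S) (p q r : A) :
  reach p q -> reach q r -> reach p r.
Proof. move=> [u Hu] [v Hv]; exists (u ++ v); by rewrite run_cat Hu. Qed.

Definition scc (S : finType) (A : dfa S) (e : A) : {set A} :=
  [set s | connect (@drel S A) e s && connect (@drel S A) s e].

Lemma in_scc (S : finType) (A : dfa S) (e s : A) :
  s \in scc e <-> reach e s /\ reach s e.
Proof.
rewrite inE; split; first by case/andP=> /reach_connect ? /reach_connect.
by case=> /reach_connect -> /reach_connect ->.
Qed.

Lemma scc_refl (S : finType) (A : dfa S) (e : A) : e \in scc e.
Proof. by rewrite inE connect0. Qed.

Lemma is_scc_scc (S : finType) (A : dfa S) (e : A) : is_scc (scc e).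
Proof.
split.
- move=> p q /in_scc [_ Hp] /in_scc [Hq _]. exact: reach_trans Hp Hq.
- move=> D HD sub. apply/subsetP=> d Hd.
  have He : e \in D by apply: (subsetP sub); exact: scc_refl.
  apply/in_scc; split; [exact: HD | exact: HD].
Qed.

Lemma scc_sym (S : finType) (A : dfa S) (e s : A) : s \in scc e -> scc s = scc e.
Proof.
move=> /in_scc [H1 H2]; apply/setP=> t; apply/idP/idP => /in_scc [H3 H4]; apply/in_scc.
- split; [exact: reach_trans H1 H3 | exact: reach_trans H4 H2].
- split; [exact: reach_trans H2 H3 | exact: reach_trans H4 H1].
Qed.

Lemma run_take (S : finType) (A : dfa S) (p : A) y i k : i <= k ->
  dfa_run p (take k y) = dfa_run (dfa_run p (take i y)) (take (k - i) (drop i y)).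
Proof.
move=> Hik. by rewrite -run_cat -takeD subnKC.
Qed.

Definition vis (S : finType) (B : dfa S) (p : B) (y : seq S) j := dfa_run p (take j y).
Definition first (S : finType) (B : dfa S) (p e : B) (y : seq S) :=
  find (fun j => vis p y j \in scc e) (iota 0 (size y).+1).
Definition entry (S : finType) (B : dfa S) (p e : B) (y : seq S) :=
  vis p y (first p e y).
Definition summT (S : finType) (B : dfa S) (m : nat) := {ffun B * B -> 'I_m.+2 * B}.
Definition summ (S : finType) (B : dfa S) (m : nat) (y : seq S) : summT B m :=
  [ffun pe => (inord (first pe.1 pe.2 y), entry pe.1 pe.2 y)].

Lemma first_le (S : finType) (B : dfa S) (p e : B) y j :
  j <= size y -> vis p y j \in scc e -> first p e y <= j.
Proof.
move=> Hj Hin. rewrite /first. case: leqP => // H.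
have := before_find 0 H. by rewrite nth_iota // add0n Hin.
Qed.

Lemma first_size (S : finType) (B : dfa S) (p e : B) y : first p e y <= (size y).+1.
Proof. by rewrite /first -[X in _ <= X](size_iota 0) find_size. Qed.

Lemma first_in (S : finType) (B : dfa S) (p e : B) y :
  first p e y <= size y -> entry p e y \in scc e.
Proof.
move=> H. have Hhas : has (fun j => vis p y j \in scc e) (iota 0 (size y).+1).
  by rewrite has_find size_iota.
have := nth_find 0 Hhas. rewrite -/(first p e y) nth_iota ?add0n //.
Qed.

Lemma vis_reach (S : finType) (B : dfa S) (p : B) y i k :
  i <= k -> reach (vis p y i) (vis p y k).
Proof. move=> H; rewrite /vis (run_take _ _ H); by eexists. Qed.

Lemma summ_eq (S : finType) (B : dfa S) m y1 y2 (p e : B) :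
  size y1 = m -> size y2 = m -> summ B m y1 = summ B m y2 ->
  first p e y1 = first p e y2 /\ entry p e y1 = entry p e y2.
Proof.
move=> H1 H2 Hs; have := congr1 (fun f : summT B m => f (p, e)) Hs; rewrite !ffunE /= => -[E1 E2].
split=> //. move/(congr1 (@nat_of_ord _)): E1. rewrite !inordK // ltnS; [rewrite -H2 | rewrite -H1]; exact: first_size.
Qed.

Lemma key (S : finType) (B : dfa S) (wb : well_behaved B) (p : B) m y1 y2 j :
  reach (dfa_init B) p -> size y1 = m -> size y2 = m -> summ B m y1 = summ B m y2 ->
  j <= m -> (vis p y1 j \in dfa_final B) = (vis p y2 j \in dfa_final B).
Proof.
move=> Hp H1 H2 Hs Hj.
set s1 := vis p y1 j. set s2 := vis p y2 j.
have [Ef Ee] := summ_eq p s1 H1 H2 Hs.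
set f := first p s1 y1.
have Hf1 : f <= j by apply: first_le; rewrite ?H1 // scc_refl.
have Hent : entry p s1 y1 \in scc s1 by apply: first_in; rewrite H1; lia.
have [Ef' _] := summ_eq p s2 H1 H2 Hs.
have Hf2 : first p s2 y2 <= j by apply: first_le; rewrite ?H2 // scc_refl.
have Hs2 : s2 \in scc s1.
  apply/in_scc; split.
  - case/in_scc: (Hent) => R1 _.
    apply: reach_trans R1 _. rewrite Ee /entry -Ef. exact: vis_reach.
  - have Hin : entry p s2 y1 \in scc s2 by apply: first_in; rewrite Ef' H1 -H2; lia.
    case/in_scc: Hin => R1 _. apply: reach_trans R1 _. apply: vis_reach. lia.
have Hr1 : s1 = dfa_run (entry p s1 y1) (take (j - f) (drop f y1)) := run_take p y1 Hf1.
have Hr2 : s2 = dfa_run (entry p s1 y1) (take (j - f) (drop f y2)).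
  rewrite Ee /entry -Ef. have := run_take p y2 Hf1. rewrite /s2 /vis. move=> ->. done.
rewrite Hr1 Hr2. apply: (wb (scc s1)).
- exact: is_scc_scc.
- exists (entry p s1 y1) => //. apply: reach_trans Hp _. rewrite /entry /vis. by eexists.
- exact: Hent.
- rewrite !size_take !size_drop H1 H2. done.
- by rewrite -Hr1 scc_refl.
- by rewrite -Hr2.
Qed.

Lemma L_acc (S : finType) (B : dfa S) (L : pred (seq S)) :
  recognizes B (rev_lang L) -> forall v, L v = dfa_accepts B (rev v).
Proof. by move=> hB v; rewrite hB /rev_lang revK. Qed.

Lemma core (S : finType) (B : dfa S) (L : pred (seq S)) :
  recognizes B (rev_lang L) -> well_behaved B ->
  forall x1 x2, size x1 = size x2 ->
  summ B (size x1) (rev x1) = summ B (size x1) (rev x2) ->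
  forall z d, L (drop d (x1 ++ z)) = L (drop d (x2 ++ z)).
Proof.
move=> hB wb x1 x2 Hs Hsum z d.
rewrite !(L_acc hB) !rev_drop !rev_cat !size_cat Hs !take_cat !size_rev.
case: ltnP => Hk //.
rewrite /dfa_accepts !run_cat.
apply: (key wb (m := size x1)) => //.
- by exists (rev z).
- by rewrite size_rev.
- by rewrite size_rev Hs.
- lia.
Qed.

Definition cstate (G : Type) (cls : seq G -> seq G -> bool) :=
  {f : seq G -> bool | exists w, f = cls w}.

Lemma cstep_proof (G : Type) (cls : seq G -> seq G -> bool)
  (Hstep : forall w g, cls (rcons w g) = fun z => cls w (g :: z))
  (f : cstate cls) (g : G) : exists w, (fun z => sval f (g :: z)) = cls w.
Proof. case: f => f /= [w E]. exists (rcons w g). by rewrite Hstep E. Qed.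

Lemma cenc_inj (G : Type) (cls : seq G -> seq G -> bool)
  (encf : (seq G -> bool) -> seq bool)
  (Henc : forall w1 w2, encf (cls w1) = encf (cls w2) -> cls w1 = cls w2) :
  injective (fun f : cstate cls => encf (sval f)).
Proof.
move=> [f1 p1] [f2 p2] /= E.
have Ef : f1 = f2.
  move: p1 p2 E => [w1 E1] [w2 E2]. subst. exact: Henc.
subst f2. by rewrite (proof_irrelevance _ p1 p2).
Qed.

Definition calg (G : Type) (cls : seq G -> seq G -> bool)
  (encf : (seq G -> bool) -> seq bool)
  (Hstep : forall w g, cls (rcons w g) = fun z => cls w (g :: z))
  (Henc : forall w1 w2, encf (cls w1) = encf (cls w2) -> cls w1 = cls w2) :
  stream_alg G :=
  @StreamAlg G (cstate cls)
    (exist _ (cls [::]) (ex_intro _ [::] erefl))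
    (fun f g => exist _ (fun z => sval f (g :: z)) (cstep_proof Hstep f g))
    (fun f => sval f [::])
    (fun f => encf (sval f))
    (cenc_inj Henc).

Lemma calg_run (G : Type) cls encf Hstep Henc (w : seq G) :
  sval (sa_run (@calg G cls encf Hstep Henc) w) = cls w.
Proof.
elim/last_ind: w => [|w g IH] //.
rewrite /sa_run foldl_rcons /= -/(sa_run _ w) IH. by rewrite Hstep.
Qed.

Lemma calg_acc (G : Type) cls encf Hstep Henc (w : seq G) :
  sa_acc (sa_run (@calg G cls encf Hstep Henc) w) = cls w [::].
Proof. by rewrite /= calg_run. Qed.

Lemma calg_enc (G : Type) cls encf Hstep Henc (s : sa_state (@calg G cls encf Hstep Henc)) :
  exists w, sa_enc s = encf (cls w).
Proof. case: s => f [w E] /=. by exists w; rewrite E. Qed.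

Lemma calg_enc_run (G : Type) cls encf Hstep Henc (w : seq G) :
  sa_enc (sa_run (@calg G cls encf Hstep Henc) w) = encf (cls w).
Proof. by rewrite /= calg_run. Qed.

Lemma leq_expn2r m n e : m <= n -> m ^ e <= n ^ e.
Proof. move=> H; elim: e => // e IH; rewrite !expnS; exact: leq_mul. Qed.

Lemma big_bound n q K : 1 < n ->
  ((n.+2) * q) ^ K <= 2 ^ ((3 + q) * K * trunc_log 2 n).
Proof.
move=> Hn. set t := trunc_log 2 n.
have Ht : 0 < t by rewrite /t trunc_log_gt0.
have Hlt : n < 2 ^ t.+1 := trunc_log_ltn n (isT : 1 < 2).
have Hq : q < 2 ^ q := ltn_expl q (isT : 1 < 2).
have H1 : n.+2 * q <= 2 ^ ((3 + q) * t).
  apply: (@leq_trans (2 ^ (t.+2 + q))).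
    rewrite expnD. apply: leq_mul; last exact: ltnW.
    rewrite expnS. lia.
  rewrite leq_exp2l //. nia.
apply: leq_trans (leq_expn2r K H1) _.
rewrite -expnM leq_exp2l //. nia.
Qed.

Definition clsF (S : Type) (a : S) (L : pred (seq S)) n (w : seq S) :=
  fun z => L (last_n a n (w ++ z)).

Lemma clsF_step (S : Type) (a : S) L n w g :
  clsF a L n (rcons w g) = fun z => clsF a L n w (g :: z).
Proof. by rewrite /clsF; apply: functional_extensionality => z; rewrite cat_rcons. Qed.

Lemma last_nE (S : Type) (a : S) n v : last_n a n v = drop (size v) (nseq n a ++ v).
Proof.
rewrite /last_n drop_cat size_nseq. case: leqP => H //. by rewrite drop_nseq.
Qed.

Lemma size_last_n (S : Type) (a : S) n v : size (last_n a n v) = n.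
Proof. rewrite last_nE size_drop size_cat size_nseq. lia. Qed.

Lemma drop_cat_le (T : Type) k (s z : seq T) : k <= size s -> drop k (s ++ z) = drop k s ++ z.
Proof.
move=> H; rewrite drop_cat; case: ltnP => H2 //.
have -> : k = size s by apply/eqP; rewrite eqn_leq H H2.
by rewrite subnn drop0 drop_size.
Qed.

Lemma clsFE (S : Type) (a : S) L n w z :
  clsF a L n w z = L (drop (size z) (last_n a n w ++ z)).
Proof.
rewrite /clsF !last_nE size_cat addnC -drop_drop catA drop_cat_le //.
rewrite size_cat size_nseq; lia.
Qed.

Lemma card_summT (S : finType) (B : dfa S) m :
  #|summT B m| = (m.+2 * #|B|) ^ #|{: B * B}|.
Proof. by rewrite /summT card_ffun !card_prod card_ord. Qed.

Lemma rank_inj (T : finType) (x y : T) :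
  nat_of_ord (enum_rank x) = nat_of_ord (enum_rank y) -> x = y.
Proof. by move/ord_inj/enum_rank_inj. Qed.

Definition encF (S : finType) (B : dfa S) (a : S) L n (f : seq S -> bool) : seq bool :=
  let w := epsilon (inhabits [::]) (fun w => f = clsF a L n w) in
  bin (enum_rank (summ B n (rev (last_n a n w)))).

Lemma encF_inj (S : finType) (B : dfa S) (a : S) L n :
  recognizes B (rev_lang L) -> well_behaved B ->
  forall w1 w2, encF B a L n (clsF a L n w1) = encF B a L n (clsF a L n w2) ->
  clsF a L n w1 = clsF a L n w2.
Proof.
move=> hB wb w1 w2. rewrite /encF.
set e1 := epsilon _ _. set e2 := epsilon _ _.
have E1 : clsF a L n w1 = clsF a L n e1 := epsilon_spec _ (fun w => clsF a L n w1 = clsF a L n w) (ex_intro _ w1 erefl).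
have E2 : clsF a L n w2 = clsF a L n e2 := epsilon_spec _ (fun w => clsF a L n w2 = clsF a L n w) (ex_intro _ w2 erefl).
move/bin_inj/rank_inj => Hs.
rewrite E1 E2. apply: functional_extensionality => z. rewrite !clsFE.
apply: (core hB wb); first by rewrite !size_last_n.
by rewrite size_last_n.
Qed.

Definition algF (S : finType) (B : dfa S) (a : S) L
  (hB : recognizes B (rev_lang L)) (wb : well_behaved B) n : stream_alg S :=
  @calg S (clsF a L n) (encF B a L n) (@clsF_step S a L n) (@encF_inj S B a L n hB wb).

Lemma in_F (S : finType) (B : dfa S) (a : S) L :
  recognizes B (rev_lang L) -> well_behaved B -> in_F_log a L.
Proof.
move=> hB wb. exists (algF a hB wb). split.
  move=> n w. by rewrite calg_acc /clsF cats0.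
exists ((3 + #|B|) * #|{: B * B}|), 2 => n Hn s.
have [w ->] := calg_enc s.
rewrite /encF. apply: size_bin.
apply: leq_trans (ltn_ord _) _.
rewrite card_summT /log2. exact: big_bound.
Qed.

Lemma ex_min (P : nat -> Prop) : (exists n, P n) -> exists n, P n /\ forall m, P m -> n <= m.
Proof.
move=> [n Hn].
suff HH : forall k n, n <= k -> P n -> exists n, P n /\ forall m, P m -> n <= m.
  exact: (HH n n (leqnn n) Hn).
elim=> [|k IH] n0 Hk Hn0.
- exists n0; split => // m _. lia.
- case: (classic (exists m, m < n0 /\ P m)) => [[m [Hm Pm]]|H].
  + apply: (IH m) => //. lia.
  + exists n0; split => // m Pm. case: (leqP n0 m) => // Hlt. exfalso; apply: H; by exists m.
Qed.

Definition wstep (S : Type) (w : seq S) (x : option S) :=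
  match x with Some b => rcons w b | None => behead w end.

Lemma windowE (S : Type) (s : seq (option S)) : window s = foldl (@wstep S) [::] s.
Proof. by []. Qed.

Lemma window_cat (S : Type) (s t : seq (option S)) :
  window (s ++ t) = foldl (@wstep S) (window s) t.
Proof. by rewrite !windowE foldl_cat. Qed.

Definition clsV (S : Type) (L : pred (seq S)) (s : seq (option S)) :=
  fun t => L (window (s ++ t)).
Definition clsW (S : Type) (L : pred (seq S)) (x : seq S) :=
  fun t => L (foldl (@wstep S) x t).

Lemma clsVW (S : Type) (L : pred (seq S)) s : clsV L s = clsW L (window s).
Proof. apply: functional_extensionality => t. by rewrite /clsV /clsW window_cat. Qed.

Lemma clsV_step (S : Type) (L : pred (seq S)) s g :
  clsV L (rcons s g) = fun t => clsV L s (g :: t).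
Proof. apply: functional_extensionality => t. by rewrite /clsV cat_rcons. Qed.

Definition Rel (S : Type) (L : pred (seq S)) (x1 x2 : seq S) :=
  size x1 = size x2 /\ forall z d, L (drop d (x1 ++ z)) = L (drop d (x2 ++ z)).

Lemma Rel_step (S : Type) (L : pred (seq S)) x1 x2 g :
  Rel L x1 x2 -> Rel L (wstep x1 g) (wstep x2 g).
Proof.
case=> Hs H. case: g => [b|] /=.
- split; first by rewrite !size_rcons Hs.
  move=> z d. by rewrite !cat_rcons H.
- case: x1 x2 Hs H => [|a1 x1] [|a2 x2] //= Hs H.
  split; first by case: Hs.
  move=> z d. exact: (H z d.+1).
Qed.

Lemma Rel_cls (S : Type) (L : pred (seq S)) x1 x2 :
  Rel L x1 x2 -> clsW L x1 = clsW L x2.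
Proof.
move=> HR. apply: functional_extensionality => t. rewrite /clsW.
elim: t x1 x2 HR => [|g t IH] x1 x2 HR /=.
- case: HR => _ H. have := H [::] 0. by rewrite !drop0 !cats0.
- apply: IH. exact: Rel_step.
Qed.

Definition minrep (S : Type) (L : pred (seq S)) (f : seq (option S) -> bool) : seq S :=
  let P m := exists x, size x = m /\ f = clsW L x in
  let m0 := epsilon (inhabits 0) (fun m => P m /\ forall m', P m' -> m <= m') in
  epsilon (inhabits [::]) (fun x => size x = m0 /\ f = clsW L x).

Lemma minrep_spec (S : Type) (L : pred (seq S)) x :
  clsW L x = clsW L (minrep L (clsW L x)) /\ size (minrep L (clsW L x)) <= size x.
Proof.
rewrite /minrep.
set P := fun m => exists x', size x' = m /\ clsW L x = clsW L x'.
have Hex : exists m, P m /\ forall m', P m' -> m <= m'.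
  apply: ex_min. by exists (size x), x.
have := epsilon_spec (inhabits 0) _ Hex.
set m0 := epsilon _ _. move=> [Pm0 Hmin].
have := epsilon_spec (inhabits [::]) (fun x0 => size x0 = m0 /\ clsW L x = clsW L x0) Pm0.
set x0 := epsilon _ _. move=> [Hs E]. split => //.
rewrite Hs. apply: Hmin. by exists x.
Qed.

Definition encV (S : finType) (B : dfa S) L (f : seq (option S) -> bool) : seq bool :=
  let x0 := minrep L f in
  code (size x0) (enum_rank (summ B (size x0) (rev x0))).

Lemma encV_inj (S : finType) (B : dfa S) L :
  recognizes B (rev_lang L) -> well_behaved B ->
  forall s1 s2, encV B L (clsV L s1) = encV B L (clsV L s2) -> clsV L s1 = clsV L s2.
Proof.
move=> hB wb s1 s2. rewrite /encV !clsVW.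
have [E1 _] := minrep_spec L (window s1).
have [E2 _] := minrep_spec L (window s2).
set x1 := minrep L _. set x2 := minrep L _.
move/code_inj => [Hs Hr].
rewrite E1 E2 -/x1 -/x2. apply: Rel_cls. split => //.
apply: (core hB wb) => //.
rewrite Hs in Hr. apply: rank_inj. rewrite -Hs in Hr *. exact: Hr.
Qed.

Definition algV (S : finType) (B : dfa S) L
  (hB : recognizes B (rev_lang L)) (wb : well_behaved B) : stream_alg (option S) :=
  @calg (option S) (clsV L) (encV B L) (@clsV_step S L) (@encV_inj S B L hB wb).

Lemma in_V (S : finType) (B : dfa S) L :
  recognizes B (rev_lang L) -> well_behaved B -> in_V_log L.
Proof.
move=> hB wb. exists (algV hB wb). split.
  move=> s. by rewrite calg_acc /clsV cats0.
exists ((3 + #|B|) * #|{: B * B}| + 5), 2 => n Hn s Hwin k Hk.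
rewrite calg_enc_run /encV clsVW.
set x := window (take k s).
have Hx : size x <= n := Hwin k Hk.
set x0 := minrep L _. rewrite size_code /log2.
have Hle : size x0 <= size x := (minrep_spec L x).2.
set t := trunc_log 2 n.
have Ht : 0 < t by rewrite /t trunc_log_gt0.
have Hlt : n < 2 ^ t.+1 := trunc_log_ltn n (isT : 1 < 2).
have H1 : size (bin (size x0)) <= t.+1.
  apply: size_bin. exact: leq_ltn_trans Hle (leq_ltn_trans Hx Hlt).
have H2 : size (bin (enum_rank (summ B (size x0) (rev x0)))) <= (3 + #|B|) * #|{: B * B}| * t.
  apply: size_bin. apply: leq_trans (ltn_ord _) _.
  rewrite card_summT. apply: leq_trans (big_bound _ _ Hn).
  apply: leq_expn2r. apply: leq_mul => //. rewrite !ltnS. exact: leq_trans Hle Hx.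
move: H1 H2. set c := (3 + #|B|) * #|{: B * B}|. clearbody c x x0 t. rewrite -addnn. nia.
Qed.

Definition Yw (S : Type) (al be : seq S) (sg : seq bool) : seq S :=
  flatten [seq (if b then al else be) | b <- sg].

Lemma Y_loop (S : finType) (B : dfa S) (q : B) al be sg :
  dfa_run q al = q -> dfa_run q be = q -> dfa_run q (Yw al be sg) = q.
Proof.
move=> Ha Hb; elim: sg => //= b sg IH. by rewrite run_cat; case: b; rewrite ?Ha ?Hb.
Qed.

Lemma size_Y (S : Type) (al be : seq S) l sg :
  size al = l -> size be = l -> size (Yw al be sg) = size sg * l.
Proof. move=> Ha Hb; elim: sg => //= b sg IH. rewrite size_cat IH; case: b; lia. Qed.

Lemma Y_take (S : Type) (al be : seq S) l j0 sg i :
  size al = l -> size be = l -> j0 <= l -> i < size sg ->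
  take (i * l + j0) (Yw al be sg) =
  Yw al be (take i sg) ++ take j0 (if nth false sg i then al else be).
Proof.
move=> Ha Hb Hj Hi.
rewrite /Yw -{1}(cat_take_drop i sg) map_cat flatten_cat (drop_nth false Hi) /=.
rewrite take_cat -/(Yw al be _) (size_Y _ Ha Hb) size_take Hi ltnNge leq_addr /=.
rewrite addKn takel_cat //. by case: (nth _ _ _); rewrite ?Ha ?Hb.
Qed.

Lemma Y_dist (S : finType) (B : dfa S) (q : B) al be l j0 sg1 sg2 :
  size al = l -> size be = l -> j0 <= l ->
  (dfa_run q (take j0 al) \in dfa_final B) != (dfa_run q (take j0 be) \in dfa_final B) ->
  dfa_run q al = q -> dfa_run q be = q ->
  size sg1 = size sg2 -> sg1 <> sg2 ->
  exists2 i, i < size sg1 &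
   (dfa_run q (take (i * l + j0) (Yw al be sg1)) \in dfa_final B) !=
   (dfa_run q (take (i * l + j0) (Yw al be sg2)) \in dfa_final B).
Proof.
move=> Ha Hb Hj Hd Hla Hlb Hs Hne.
case: (classic (exists2 i, i < size sg1 & nth false sg1 i != nth false sg2 i)).
- case=> i Hi Hn. exists i => //.
  have Hi2 : i < size sg2 by rewrite -Hs.
  rewrite (Y_take Ha Hb Hj Hi) (Y_take Ha Hb Hj Hi2) !run_cat !Y_loop //.
  by move: Hn Hd; case: (nth _ sg1 i); case: (nth _ sg2 i) => //= _; rewrite eq_sym.
- move=> H; exfalso; apply: Hne. apply: (eq_from_nth (x0 := false) Hs) => i Hi.
  apply/eqP/negPn/negP => Hn; apply: H; by exists i.
Qed.

Lemma fooling (T : Type) (enc : T -> seq bool) (enc_inj : injective enc) k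
  (st : k.-tuple bool -> T) (st_inj : injective st) s :
  (forall sg, size (enc (st sg)) <= s) -> 2 ^ k <= 2 ^ s.+1.
Proof.
move=> Hs. have := @count_bound _ (fun sg => enc (st sg)) s.
rewrite card_tuple card_bool. apply => //. by move=> x y /enc_inj /st_inj.
Qed.

Lemma arith c e N : exists m, N <= 2 ^ m /\ c * (m + e) + 1 < 2 ^ m.
Proof.
set y := c + e + N + 2. exists (3 * y).
have Hy : y < 2 ^ y := ltn_expl y (isT : 1 < 2).
have H3 : y.+1 ^ 3 <= (2 ^ y) ^ 3 := leq_expn2r 3 Hy.
have E : 2 ^ (3 * y) = 2 ^ y * 2 ^ y * 2 ^ y by rewrite mulnC expnM !expnS expn0 muln1 mulnA.
rewrite E. rewrite !expnS expn0 muln1 in H3. move: Hy H3. set P := 2 ^ y. clearbody P.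
rewrite /y. move=> Hy H3.
split; nia.
Qed.

Lemma log_le n m e : 0 < n -> n <= 2 ^ (m + e) -> log2 n <= m + e.
Proof.
move=> Hn H. have := trunc_logP (isT : 1 < 2) Hn.
move=> H2. rewrite -(leq_exp2l _ _ (isT : 1 < 2)). exact: leq_trans H2 H.
Qed.

Lemma win_some (S : Type) (x w : seq S) : foldl (@wstep S) x (map Some w) = x ++ w.
Proof. elim: w x => [|b w IH] x /=; first by rewrite cats0. by rewrite IH cat_rcons. Qed.

Lemma win_none (S : Type) (x : seq S) d : foldl (@wstep S) x (nseq d None) = drop d x.
Proof. elim: d x => [|d IH] x /=; first by rewrite drop0. rewrite IH. by case: x. Qed.

Lemma take_catD (T : Type) (s1 s2 : seq T) p : take (size s1 + p) (s1 ++ s2) = s1 ++ take p s2.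
Proof. by rewrite takeD take_size_cat // drop_size_cat. Qed.

Lemma winV_acc (S : finType) (B : dfa S) L (hB : recognizes B (rev_lang L)) (q : B) x0 Y p :
  dfa_run (dfa_init B) x0 = q -> p <= size Y ->
  L (window (map Some (rev Y) ++ map Some (rev x0) ++ nseq (size Y - p) None)) =
  (dfa_run q (take p Y) \in dfa_final B).
Proof.
move=> Hx Hp.
rewrite (L_acc hB) window_cat windowE win_some foldl_cat win_some win_none /=.
rewrite rev_drop rev_cat !revK !size_cat !size_rev.
have -> : size Y + size x0 - (size Y - p) = size x0 + p by lia.
by rewrite take_catD /dfa_accepts run_cat Hx.
Qed.

Lemma lowV (S : finType) (B : dfa S) L (hB : recognizes B (rev_lang L)) :
  in_V_log L -> forall (q : B) x0 al be l j0,
  dfa_run (dfa_init B) x0 = q -> size al = l -> size be = l -> 0 < l -> j0 <= l ->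
  (dfa_run q (take j0 al) \in dfa_final B) != (dfa_run q (take j0 be) \in dfa_final B) ->
  dfa_run q al = q -> dfa_run q be = q -> False.
Proof.
move=> [A [Hc [c [N Hb]]]] q x0 al be l j0 Hx Ha Hbe Hl Hj Hd Hla Hlb.
have [m [HN Hm]] := arith c l N.
set k := 2 ^ m. set n := k * l.
pose st (sg : k.-tuple bool) := sa_run A (map Some (rev (Yw al be sg))).
have st_inj : injective st.
  move=> s1 s2 E. apply: val_inj. apply: NNPP => Hne.
  have [i Hi Hdi] := Y_dist Ha Hbe Hj Hd Hla Hlb (etrans (size_tuple s1) (esym (size_tuple s2))) Hne.
  rewrite size_tuple in Hi.
  have Hp : i * l + j0 <= k * l by nia.
  set t := map Some (rev x0) ++ nseq (k * l - (i * l + j0)) None.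
  have := Hc (map Some (rev (Yw al be s1)) ++ t).
  have := Hc (map Some (rev (Yw al be s2)) ++ t).
  rewrite /sa_run !foldl_cat -!/(sa_run _ _) -/(st s1) -/(st s2) E => ->.
  rewrite /t. have Hs1 := size_Y s1 Ha Hbe. have Hs2 := size_Y s2 Ha Hbe.
  rewrite size_tuple in Hs1. rewrite size_tuple in Hs2.
  have W1 := winV_acc hB (Y := Yw al be s1) (p := i * l + j0) Hx.
  have W2 := winV_acc hB (Y := Yw al be s2) (p := i * l + j0) Hx.
  rewrite Hs1 in W1. rewrite Hs2 in W2. rewrite (W1 Hp) (W2 Hp) => E2.
  by rewrite E2 eqxx in Hdi.
have := fooling (@sa_enc_inj _ A) st_inj (s := c * log2 n).
have Hn : N <= n by rewrite /n; nia.
have Hlog : log2 n <= m + l.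
  apply: log_le; first by rewrite /n; nia.
  rewrite expnD /n. apply: leq_mul => //. exact: ltnW (ltn_expl _ _).
move=> H. have {H} : 2 ^ k <= 2 ^ (c * log2 n).+1.
  apply: H => sg.
  have HH := Hb n Hn (map Some (rev (Yw al be sg))).
  rewrite /st -[X in sa_run A X]take_size. apply: HH => // j Hj'. rewrite -map_take windowE win_some /=.
  rewrite size_take size_rev (size_Y _ Ha Hbe) size_tuple. case: ltnP => //. lia.
rewrite leq_exp2l // => Hk. move: Hm. rewrite -/k. nia.
Qed.

Lemma Facc (S : Type) (a : S) (L : pred (seq S)) n (w z : seq S) :
  size w = n -> L (last_n a n (w ++ z)) = L (drop (size z) (w ++ z)).
Proof.
move=> Hw. have := clsFE a L n w z. rewrite /clsF => ->.
have Hl : last_n a n w = w by rewrite last_nE drop_size_cat // size_nseq.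
by rewrite Hl.
Qed.

Lemma winF_acc (S : finType) (B : dfa S) L (hB : recognizes B (rev_lang L)) (a : S)
  (q : B) x0 Y Z pad p :
  dfa_run (dfa_init B) x0 = q -> dfa_run q Z = q -> p <= size Y ->
  size Y + size pad = size x0 + (size Z + p) ->
  L (last_n a (size Y + size pad) (rev (Y ++ pad) ++ rev (x0 ++ Z))) =
  (dfa_run q (take p Y) \in dfa_final B).
Proof.
move=> Hx HZ Hp Hs.
rewrite (@Facc _ a L (size Y + size pad) (rev (Y ++ pad))); last by rewrite size_rev size_cat.
rewrite (L_acc hB) rev_drop [rev (rev _ ++ _)]rev_cat !revK !size_cat !size_rev !size_cat.
have -> : size Y + size pad + (size x0 + size Z) - (size x0 + size Z) = size x0 + (size Z + p) by lia.
rewrite -catA take_catD take_catD takel_cat //.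
by rewrite /dfa_accepts !run_cat Hx HZ.
Qed.

Lemma lowF (S : finType) (B : dfa S) L (hB : recognizes B (rev_lang L)) (a : S) :
  in_F_log a L -> forall (q : B) x0 al be l j0,
  dfa_run (dfa_init B) x0 = q -> size al = l -> size be = l -> 0 < l -> j0 <= l ->
  (dfa_run q (take j0 al) \in dfa_final B) != (dfa_run q (take j0 be) \in dfa_final B) ->
  dfa_run q al = q -> dfa_run q be = q -> False.
Proof.
move=> [A [Hc [c [N Hb]]]] q x0 al be l j0 Hx Ha Hbe Hl Hj Hd Hla Hlb.
set P := size x0 + j0.
have [m [HN Hm]] := arith c (l + P) N.
set k := 2 ^ m. set n := k * l + P.
set pad := nseq P a.
pose st (sg : k.-tuple bool) := sa_run (A n) (rev (Yw al be sg ++ pad)).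
have st_inj : injective st.
  move=> s1 s2 E. apply: val_inj. apply: NNPP => Hne.
  have [i Hi Hdi] := Y_dist Ha Hbe Hj Hd Hla Hlb (etrans (size_tuple s1) (esym (size_tuple s2))) Hne.
  rewrite size_tuple in Hi.
  have Hp : i * l + j0 <= k * l by nia.
  set Z := Yw al be (nseq (k - i) true).
  have HZ : dfa_run q Z = q by apply: Y_loop.
  have HsZ : size Z = (k - i) * l by rewrite (size_Y _ Ha Hbe) size_nseq.
  have := Hc n (rev (Yw al be s1 ++ pad) ++ rev (x0 ++ Z)).
  have := Hc n (rev (Yw al be s2 ++ pad) ++ rev (x0 ++ Z)).
  rewrite /sa_run !foldl_cat -!/(sa_run _ _) -/(st s1) -/(st s2) E => ->.
  have Hs1 := size_Y s1 Ha Hbe. have Hs2 := size_Y s2 Ha Hbe.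
  rewrite size_tuple in Hs1. rewrite size_tuple in Hs2.
  have Hpad : size pad = P by rewrite size_nseq.
  have En1 : n = size (Yw al be s1) + size pad by rewrite Hs1 Hpad.
  have En2 : n = size (Yw al be s2) + size pad by rewrite Hs2 Hpad.
  have W1 := winF_acc hB a (Y := Yw al be s1) (Z := Z) (pad := pad) (p := i * l + j0) Hx HZ.
  have W2 := winF_acc hB a (Y := Yw al be s2) (Z := Z) (pad := pad) (p := i * l + j0) Hx HZ.
  rewrite -En1 in W1. rewrite -En2 in W2.
  rewrite Hs1 HsZ in W1. rewrite Hs2 HsZ in W2.
  have En : n = size x0 + ((k - i) * l + (i * l + j0)) by rewrite /n /P; nia.
  rewrite W1 ?W2 // => E2.
  by rewrite E2 eqxx in Hdi.
have Hn : N <= n by rewrite /n; nia.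
have := fooling (@sa_enc_inj _ (A n)) st_inj (s := c * log2 n).
have Hlog : log2 n <= m + (l + P).
  apply: log_le; first by rewrite /n; nia.
  rewrite expnD /n. have := ltn_expl (l + P) (isT : 1 < 2). nia.
move=> H. have {H} : 2 ^ k <= 2 ^ (c * log2 n).+1.
  apply: H => sg. exact: Hb.
rewrite leq_exp2l // => Hk. move: Hm. rewrite -/k. nia.
Qed.

Definition revdfa (S : finType) (A : dfa S) : dfa S :=
  @Dfa S {set A} (dfa_final A) (fun (X : {set A}) (b : S) => [set p | dfa_trans p b \in X])
    [set X : {set A} | dfa_init A \in X].

Lemma revdfa_run (S : finType) (A : dfa S) (y : seq S) :
  dfa_run (dfa_init (revdfa A)) y = [set p | dfa_run p (rev y) \in dfa_final A].
Proof.
elim/last_ind: y => [|y b IH].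
  by apply/setP => p; rewrite inE.
rewrite /dfa_run foldl_rcons -/(dfa_run _ y) IH /=. apply/setP => p.
by rewrite !inE rev_rcons.
Qed.

Lemma revdfa_rec (S : finType) (A : dfa S) L :
  recognizes A L -> recognizes (revdfa A) (rev_lang L).
Proof.
move=> hA w. rewrite /dfa_accepts revdfa_run /= !inE /rev_lang -hA.
by [].
Qed.

Unset Implicit Arguments.
Theorem corollary5p4 (Sigma : finType) (X : sw_model Sigma) (L : pred (seq Sigma)) :
  regular L ->
  (in_class_log X L <->
   exists A : dfa Sigma, recognizes A (rev_lang L) /\ well_behaved A).
Proof.
move=> [A0 hA0]. split.
- move=> HX. exists (revdfa A0). have := revdfa_rec hA0.
  move: (revdfa A0) => B hB. split => //.
  move=> C HC [q0 Hq0 Hr0] q u v Hq Hsz Hu Hv.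
  case: (boolP ((dfa_run q u \in dfa_final B) == (dfa_run q v \in dfa_final B))) => [/eqP //|Hne].
  exfalso.
  have [x0 Hx0] : reach (dfa_init B) q := reach_trans Hr0 (HC.1 _ _ Hq0 Hq).
  have [ru Hru] : reach (dfa_run q u) q := HC.1 _ _ Hu Hq.
  have [rv Hrv] : reach (dfa_run q v) q := HC.1 _ _ Hv Hq.
  set al := u ++ ru ++ v ++ rv. set be := v ++ rv ++ u ++ ru.
  have Hbe : size be = size al by rewrite /al /be !size_cat Hsz; lia.
  have Hla : dfa_run q al = q.
    rewrite /al !run_cat. have -> : dfa_run (dfa_run q u) ru = q := Hru. exact: Hrv.
  have Hlb : dfa_run q be = q.
    rewrite /be !run_cat. have -> : dfa_run (dfa_run q v) rv = q := Hrv. exact: Hru.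
  have Ta : take (size u) al = u by rewrite /al take_size_cat.
  have Tb : take (size u) be = v by rewrite /be take_size_cat.
  have Hj : size u <= size al by rewrite /al size_cat leq_addr.
  have Hd : (dfa_run q (take (size u) al) \in dfa_final B) !=
            (dfa_run q (take (size u) be) \in dfa_final B) by rewrite Ta Tb.
  have Hl : 0 < size al.
    apply: leq_trans Hj. rewrite lt0n. apply/negP => /eqP /size0nil Eu.
    have Ev : v = [::] by apply: size0nil; rewrite -Hsz Eu.
    by move: Hne; rewrite Eu Ev eqxx.
  case: X HX => [a|] HX.
  + exact: (lowF hB HX Hx0 erefl Hbe Hl Hj Hd Hla Hlb).
  + exact: (lowV hB HX Hx0 erefl Hbe Hl Hj Hd Hla Hlb).
- move=> [B [hB wb]]. case: X => [a|] /=.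
  + exact: in_F hB wb.
  + exact: in_V hB wb.
Qed.
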